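(* Let $n\ge2$ and $s\ge1$ be integers and $b\ge2$ an integer. For a degree pattern $\mathbf d=(d_1,\dots,d_s)\in\mathbb N^s$ with $d_1\ge\cdots\ge d_s\ge1$ and $d_1\ge2$, put $\delta(\mathbf d)=d_1\cdots d_s$ and $|\mathbf D(\mathbf d)|=\sum_{i=1}^s\big(\binom{d_i+n}{n}-1\big)$. Let $\mathbf d^{(b)}=(b,1,\dots,1)\in\mathbb N^s$. Then $|\mathbf D(\mathbf d^{(b)})|>|\mathbf D(\mathbf d)|$ for every such degree pattern $\mathbf d\ne\mathbf d^{(b)}$ with $\delta(\mathbf d)=b$. *)

(* Defs.v *)
From mathcomp Require Import all_boot.
Set Implicit Arguments. Unset Strict Implicit. Unset Printing Implicit Defensive.

Definition delta (d : seq nat) : nat := \prod_(x <- d) x.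

Definition cardD (n : nat) (d : seq nat) : nat :=
  \sum_(x <- d) ('C(x + n, n) - 1).

Definition degree_pattern (s : nat) (d : seq nat) : Prop :=
  size d = s /\ sorted geq d /\ all (fun x => 0 < x) d /\ 2 <= head 0 d.

Definition dpat_b (s b : nat) : seq nat := b :: nseq s.-1 1.

(* Main.v *)
Require Import Defs.
From mathcomp Require Import all_boot.
From mathcomp Require Import zify.

Section H.
Variable n' : nat.
Local Notation h k := 'C(k + n'.+1, n'.+1).

Lemma hS k : h k.+1 = h k + 'C(k + n'.+1, n').
Proof. by rewrite addSn binS addnC. Qed.

Lemma hshift a c m : a <= c -> h (a + m) + h c <= h (c + m) + h a.
Proof.
move=> ac; elim: m => [|m IH]; first by rewrite !addn0 addnC.
rewrite (addnS a m) (addnS c m) !hS.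
have : 'C(a + m + n'.+1, n') <= 'C(c + m + n'.+1, n') by apply: leq_bin2l; lia.
lia.
Qed.

Lemma hmono a c : a <= c -> h a <= h c.
Proof.
move=> ac; rewrite -(subnKC ac); elim: (c - a) => [|m IH]; first by rewrite addn0.
rewrite (addnS a m) hS; lia.
Qed.

Lemma hsmono a c : a < c -> h a < h c.
Proof.
move=> ac; apply: (@leq_trans (h a.+1)); last exact: hmono.
rewrite hS -[X in X < _]addn0 ltn_add2l bin_gt0; lia.
Qed.

Lemma key x y : 1 <= x -> 1 <= y -> h x + h y <= h (x * y) + h 1.
Proof.
move=> hx hy.
have := hshift 1 y (y * (x - 1)) hy.
have E : y + y * (x - 1) = x * y by nia.
rewrite E => H.
have : h x <= h (1 + y * (x - 1)) by apply: hmono; nia.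
lia.
Qed.

Lemma key_strict x y : 2 <= x -> 2 <= y -> h x + h y < h (x * y) + h 1.
Proof.
move=> hx hy.
have := hshift 1 y (y * (x - 1)) (ltnW hy).
have E : y + y * (x - 1) = x * y by nia.
rewrite E => H.
have : h x < h (1 + y * (x - 1)) by apply: hsmono; nia.
lia.
Qed.

Lemma sumle d : all (fun x => 0 < x) d ->
  \sum_(x <- d) h x + h 1 <= h (\prod_(x <- d) x) + size d * h 1.
Proof.
elim: d => [|x t IH] /=; first by rewrite !big_nil mul0n addn0 add0n.
move=> /andP [hx ht]; rewrite !big_cons.
have P1 : 0 < \prod_(y <- t) y.
  elim: t ht {IH} => [|z t' IH'] /=; first by rewrite big_nil.
  by move=> /andP [hz ht']; rewrite big_cons muln_gt0 hz IH'.
have := IH ht; have := key x _ hx P1; lia.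
Qed.
End H.

Lemma cardDE n d : cardD n d + size d = \sum_(x <- d) 'C(x + n, n).
Proof.
rewrite /cardD; elim: d => [|x t IH] /=; first by rewrite !big_nil.
rewrite !big_cons.
have : 0 < 'C(x + n, n) by rewrite bin_gt0 leq_addl.
lia.
Qed.

Lemma prod1 (t : seq nat) : \prod_(x <- t) x = 1 -> t = nseq (size t) 1.
Proof.
elim: t => [|x t IH] //=; rewrite big_cons => /eqP.
by rewrite muln_eq1 => /andP [/eqP -> /eqP /IH <-].
Qed.

Theorem lemma5p1 (n s b : nat) (d : seq nat) :
  2 <= n -> 1 <= s -> 2 <= b ->
  degree_pattern s d ->
  d <> dpat_b s b ->
  delta d = b ->
  cardD n d < cardD n (dpat_b s b).
Proof.
case: n => [|n'] // _ s1 b2 [sz [_ [pos hd]]] neq del.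
case: d sz pos hd neq del => [|x t] //= sz /andP [hx ht] hx2 neq.
rewrite /delta big_cons => del.
set P := \prod_(y <- t) y in del.
have P2 : 2 <= P.
  case: (ltngtP P 1) => // HP.
    nia.
  exfalso; apply: neq; rewrite -sz /= -del HP muln1 /dpat_b /=.
  by rewrite {1}(@prod1 t HP).
have A := cardDE n'.+1 (x :: t).
have B := cardDE n'.+1 (dpat_b s b).
rewrite /dpat_b /= size_nseq !big_cons big_nseq in B.
rewrite /= big_cons in A.
have := sumle n' t ht; have := key_strict n' x P hx2 P2.
rewrite del.
have E : forall k, iter k (fun x0 => 'C(1 + n'.+1, n'.+1) + x0) 0 = k * 'C(1 + n'.+1, n'.+1).
  by elim => [|k IHk] //=; rewrite IHk mulSn.
rewrite E in B.
rewrite -/P.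
have : s.-1 = size t by lia.
move=> st; rewrite st in B.
rewrite /dpat_b st. lia.
Qed.
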